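(* A regular Hausdorff space $X$ is a Nagata space if and only if $\mathcal{F}(X)$ is a Nagata space.
   Context: $\mathcal{F}(X)$ is the set of nonempty finite subsets of $X$ with the Vietoris topology (base: $\langle U_1,\dots,U_k\rangle=\{A: A\subset\bigcup_i U_i,\ A\cap U_j\neq\emptyset\ \forall j\}$, $U_i$ open in $X$). A space $Y$ is a Nagata space if for each $x\in Y$ there are sequences $\{U_n(x)\}_{n\in\mathbb{N}}$ and $\{V_n(x)\}_{n\in\mathbb{N}}$ of open neighborhoods of $x$ such that (i) $\{U_n(x)\}$ is a local base at $x$ with $U_{n+1}(x)\subset U_n(x)$, and (ii) if $y\notin U_n(x)$ then $V_n(x)\cap V_n(y)=\emptyset$. *)

(* Defs.v *)
From HB Require Import structures.
From mathcomp Require Import all_boot all_order all_algebra.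
From mathcomp Require Import all_classical all_reals all_analysis.
Set Implicit Arguments. Unset Strict Implicit. Unset Printing Implicit Defensive.
Local Open Scope classical_set_scope.

Definition nagata_wrt (Y : Type) (op : set Y -> Prop) : Prop :=
  exists (U V : Y -> nat -> set Y), forall x : Y,
    [/\ (forall n, op (U x n) /\ U x n x),
        (forall n, op (V x n) /\ V x n x),
        (forall W, op W -> W x -> exists n, U x n `<=` W),
        (forall n, U x n.+1 `<=` U x n) &
        (forall n y, ~ U x n y -> V x n `&` V y n = set0)].

Definition nagata_space (X : topologicalType) : Prop :=
  nagata_wrt (@open X).

Definition finsubsets (X : Type) : Type :=
  {A : set X | finite_set A /\ A !=set0}.

Definition vietoris_basic (X : topologicalType) (Us : seq (set X))
  : set (finsubsets X) :=
  fun A => (proj1_sig A `<=` (fun x => exists2 U, U \in Us & U x)) /\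
           (forall U, U \in Us -> proj1_sig A `&` U !=set0).

Definition vietoris_open (X : topologicalType) (W : set (finsubsets X)) : Prop :=
  forall A, W A -> exists Us : seq (set X),
    [/\ (forall U, U \in Us -> open U), vietoris_basic Us A &
        vietoris_basic Us `<=` W].

(* Main.v *)
Require Import Defs.
From mathcomp Require Import all_boot all_order all_algebra.
From mathcomp Require Import all_classical all_reals all_analysis.
Local Open Scope classical_set_scope.

Definition sA {X : topologicalType} (A : finsubsets X) : seq X :=
  projT1 (cid (iffLR (finite_seqP _) (proj1 (proj2_sig A)))).

Lemma sAP {X : topologicalType} (A : finsubsets X) a : a \in sA A <-> proj1_sig A a.
Proof. rewrite /sA; case: cid => s /= ->. done. Qed.

Lemma ev_seq (T : eqType) (s : seq T) (P : T -> nat -> Prop) :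
  (forall t n m, (n <= m)%N -> P t n -> P t m) ->
  (forall t, t \in s -> exists n, P t n) -> exists N, forall t, t \in s -> P t N.
Proof.
move=> mono; elim: s => [|t s IH] H; first by exists 0%N.
have [n1 Hn1] : exists N, forall u, u \in s -> P u N.
  by apply: IH => u us; apply: H; rewrite in_cons us orbT.
have [n2 Hn2] := H t (mem_head t s).
exists (maxn n1 n2) => u; rewrite in_cons => /orP [/eqP -> | us].
- apply: mono Hn2; exact: leq_maxr.
- apply: mono (Hn1 u us); exact: leq_maxl.
Qed.

Lemma Umono (X : Type) (U : X -> nat -> set X) :
  (forall x n, U x n.+1 `<=` U x n) -> forall x n m, (n <= m)%N -> U x m `<=` U x n.
Proof.
move=> hU x n m /subnK <-; elim: (m - n)%N => //= k IH.
rewrite addSn; exact: subset_trans (hU _ _) IH.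
Qed.

Lemma basic_open (X : topologicalType) (Us : seq (set X)) :
  (forall U, U \in Us -> open U) -> vietoris_open (vietoris_basic Us).
Proof. by move=> H A HA; exists Us; split. Qed.

Lemma basic_mem (X : topologicalType) (W : X -> nat -> set X) A n :
  (forall a, W a n a) -> vietoris_basic [seq W a n | a <- sA A] A.
Proof.
move=> hW; split.
- move=> x Ax; exists (W x n) => //; apply: map_f; exact/sAP.
- move=> U0 /mapP [a /sAP Aa ->]; exists a; split => //.
Qed.

Lemma nbhs_fin (X : topologicalType) (y : X) (Us : seq (set X)) :
  (forall W, W \in Us -> open W /\ W y) ->
  nbhs y [set z | forall W, W \in Us -> W z].
Proof.
elim: Us => [|W Us IH] H.
- by apply: filterS filterT => z _ W; rewrite in_nil.
- have h1 : nbhs y W by apply: open_nbhs_nbhs; apply: H; exact: mem_head.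
  have h2 : nbhs y [set z | forall W, W \in Us -> W z].
    by apply: IH => W0 W0in; apply: H; rewrite in_cons W0in orbT.
  apply: filterS (filterI h1 h2) => z [Wz Hz] W0.
  by rewrite in_cons => /orP [/eqP -> // | /Hz //].
Qed.

Definition sing {X : topologicalType} (x : X) : finsubsets X :=
  exist _ [set x] (conj (finite_set1 x) (ex_intro _ x erefl)).

Lemma sing_open (X : topologicalType) (W : set (finsubsets X)) :
  vietoris_open W -> open (fun y => W (sing y)).
Proof.
move=> hW; rewrite openE => y Wy.
case: (hW _ Wy) => Us [Uso [sub meet] sW].
have [U0 U0in U0y] := sub y erefl.
have : nbhs y [set z | forall W0, W0 \in Us -> W0 z].
  apply: nbhs_fin => W0 W0in; split; first exact: Uso.
  by have [z [/= -> W0z]] := meet W0 W0in.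
apply: filterS => z Hz; apply: sW; split.
- move=> z' /= ->; exists U0 => //; exact: Hz.
- move=> W0 W0in; exists z; split => //; exact: Hz.
Qed.

Theorem theorem4p5 (X : topologicalType) :
  hausdorff_space X -> regular_space X ->
  (nagata_space X <-> nagata_wrt (@vietoris_open X)).
Proof.
move=> _ _; split.
- move=> [U [V H]].
  have Uop : forall x n, open (U x n) /\ U x n x by move=> x; case: (H x).
  have Vop : forall x n, open (V x n) /\ V x n x by move=> x; case: (H x).
  have Ubase : forall x W, open W -> W x -> exists n, U x n `<=` W
    by move=> x; case: (H x).
  have Udec : forall x n, U x n.+1 `<=` U x n by move=> x; case: (H x).
  have Vdis : forall x n y, ~ U x n y -> V x n `&` V y n = set0
    by move=> x; case: (H x).
  exists (fun A n => vietoris_basic [seq U a n | a <- sA A]),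
         (fun A n => vietoris_basic [seq V a n | a <- sA A]) => A.
  split.
  + move=> n; split; [apply: basic_open => U0 /mapP [a _ ->]; exact: (Uop a n).1
                     | apply: basic_mem => a; exact: (Uop a n).2].
  + move=> n; split; [apply: basic_open => U0 /mapP [a _ ->]; exact: (Vop a n).1
                     | apply: basic_mem => a; exact: (Vop a n).2].
  + move=> W hW WA; case: (hW _ WA) => Us [Uso [sub meet] sW].
    have [N HN] : exists N, forall a, a \in sA A ->
        forall W0, W0 \in Us -> W0 a -> U a N `<=` W0.
      apply: ev_seq.
      * move=> a n m nm Hn W0 W0in W0a; apply: subset_trans (Hn _ W0in W0a).
        exact: Umono.
      * move=> a _.
        apply: (@ev_seq _ Us (fun W0 n => W0 a -> U a n `<=` W0)).
        - move=> W0 n m nm Hn W0a; apply: subset_trans (Hn W0a); exact: Umono.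
        - move=> W0 W0in; case: (pselect (W0 a)) => W0a.
          + have [n hn] := Ubase a W0 (Uso _ W0in) W0a; by exists n.
          + by exists 0%N.
    exists N => B [Bsub Bmeet]; apply: sW; split.
    * move=> b Bb; have [U0 /mapP [a aA ->] Uab] := Bsub b Bb.
      have Aa := (sAP _ _).1 aA.
      have [W0 W0in W0a] := sub a Aa.
      exists W0 => //; exact: HN aA W0 W0in W0a b Uab.
    * move=> W0 W0in; have [a [Aa W0a]] := meet W0 W0in.
      have aA := (sAP _ _).2 Aa.
      have [b [Bb Uab]] := Bmeet (U a N) (map_f (fun a => U a N) aA).
      exists b; split => //; exact: HN _ aA W0 W0in W0a b Uab.
  + move=> n B [Bsub Bmeet]; split.
    * move=> b Bb; have [U0 /mapP [a aA ->] Uab] := Bsub b Bb.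
      exists (U a n); [exact: (map_f (fun a => U a n) aA) | exact: Udec _ _ _ Uab].
    * move=> U0 /mapP [a aA ->].
      have [b [Bb Uab]] := Bmeet (U a n.+1) (map_f (fun a => U a n.+1) aA).
      exists b; split => //; exact: Udec.
  + move=> n B nUB; rewrite -subset0 => C [[C1 C2] [D1 D2]].
    case/not_andP: nUB.
    * move/existsNP => [b /not_implyP [Bb nb]].
      have bB := (sAP _ _).2 Bb.
      have [c [Cc Vbc]] := D2 (V b n) (map_f (fun a => V a n) bB).
      have [U0 /mapP [a aA ->] Vac] := C1 c Cc.
      have nU : ~ U a n b.
        move=> Uab; apply: nb; exists (U a n) => //; exact: (map_f (fun a => U a n) aA).
      have E := Vdis a n b nU.
      have : (V a n `&` V b n) c by split.
      by rewrite E.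
    * move/existsNP => [U0 /not_implyP [/mapP [a aA ->] ne]].
      have [c [Cc Vac]] := C2 (V a n) (map_f (fun a => V a n) aA).
      have [V0 /mapP [b bB ->] Vbc] := D1 c Cc.
      have nU : ~ U a n b.
        move=> Uab; apply: ne; exists b; split => //; exact/sAP.
      have E := Vdis a n b nU.
      have : (V a n `&` V b n) c by split.
      by rewrite E.
- move=> [U' [V' H]].
  exists (fun x n y => U' (sing x) n (sing y)),
         (fun x n y => V' (sing x) n (sing y)) => x.
  case: (H (sing x)) => hU hV hB hD hdis; split.
  + move=> n; split; [exact: sing_open (hU n).1 | exact: (hU n).2].
  + move=> n; split; [exact: sing_open (hV n).1 | exact: (hV n).2].
  + move=> W Wo Wx.
    have Wop : vietoris_open (vietoris_basic [:: W]).
      by apply: basic_open => W0; rewrite inE => /eqP ->.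
    have Wb : vietoris_basic [:: W] (sing x).
      split; first by move=> z /= ->; exists W => //; exact: mem_head.
      by move=> W0; rewrite inE => /eqP ->; exists x; split.
    have [n hn] := hB _ Wop Wb.
    exists n => y /hn [sub _].
    have [W0 W0in W0y] := sub y erefl.
    by move: W0in; rewrite inE => /eqP E; rewrite -E.
  + move=> n y; exact: hD.
  + move=> n y nU.
    have E := hdis n (sing y) nU.
    rewrite -subset0 => z [Vx Vy].
    have : (V' (sing x) n `&` V' (sing y) n) (sing z) by split.
    by rewrite E.
Qed.
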